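(* Suppose Assumptions 1 and 3 hold and $\boldsymbol{x}\notin\mathcal{Z}$. Let $\boldsymbol{y}^*=(\boldsymbol{u}^*,\rho^* )$ with $\rho^*>0$ be a solution of $\boldsymbol{F}(\boldsymbol{y})=\boldsymbol{0}$. Then every $J\in\mathcal{J}_{\boldsymbol{F}}(\boldsymbol{y}^* )$ is nonsingular. Furthermore, there exist a neighborhood $N(\boldsymbol{y}^* )$ of $\boldsymbol{y}^*$ and a constant $C>0$ such that for every $\boldsymbol{y}\in N(\boldsymbol{y}^* )$ and every $J\in\mathcal{J}_{\boldsymbol{F}}(\boldsymbol{y})$, $J$ is nonsingular and $\|J^{-1}\|\le C$.
   Context: Assumption 1: $l:\mathbb{R}\to\mathbb{R}$ is nondecreasing and convex, and $\inf_x l(x)<\lambda$. Assumption 3: $l$ is differentiable and nonconstant, and $l'$ is semismooth with respect to its Clarke subdifferential $\partial l'$. $\mathcal{Z}=\{\boldsymbol{z}\in\mathbb{R}^m:\frac1m\sum_i l(z_i)\le\lambda\}$. $L(\boldsymbol{u})=\sum_{i=1}^m l(u_i)$, $\nabla L(\boldsymbol{u})=(l'(u_i))_{i}$, $\partial\nabla L(\boldsymbol{u})=\{\mathrm{diag}(\eta_1,\dots,\eta_m):\eta_i\in\partial l'(u_i)\}$. For $\boldsymbol{y}=(\boldsymbol{u},\rho)$: $\boldsymbol{F}(\boldsymbol{y})=\big(\boldsymbol{u}-\boldsymbol{x}+\frac{\rho}{m}\nabla L(\boldsymbol{u}),\ \frac1mL(\boldsymbol{u})-\lambda\big)$ and $\mathcal{J}_{\boldsymbol{F}}(\boldsymbol{y})=\Big\{\begin{bmatrix}\mathbf{I}+\frac{\rho}{m}\Lambda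 & \frac1m\nabla L(\boldsymbol{u})\\ \frac1m\nabla L(\boldsymbol{u})^\top & 0\end{bmatrix}:\Lambda\in\partial\nabla L(\boldsymbol{u})\Big\}$. $\|\cdot\|$ on matrices is the spectral norm. *)

(* Defs.v *)
From HB Require Import structures.
From mathcomp Require Import all_boot all_order all_algebra.
From mathcomp Require Import all_classical all_reals all_analysis.
Set Implicit Arguments. Unset Strict Implicit. Unset Printing Implicit Defensive.
Import Order.TTheory GRing.Theory Num.Theory.
Import numFieldNormedType.Exports.
Local Open Scope classical_set_scope.
Local Open Scope ring_scope.

Section Defs.
Variable R : realType.

Definition nondecr_fun (l : R -> R) := forall a b : R, a <= b -> l a <= l b.

Definition convexR_fun (l : R -> R) :=
  forall (a b t : R), 0 <= t -> t <= 1 ->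
    l (t * a + (1 - t) * b) <= t * l a + (1 - t) * l b.

(* inf_x l(x) < lam  (inf possibly -oo) *)
Definition assumption1 (l : R -> R) (lam : R) :=
  [/\ nondecr_fun l, convexR_fun l & exists t : R, l t < lam].

Definition Bsubdiff (g : R -> R) (x : R) : set R :=
  [set v | exists s : nat -> R,
     [/\ s @ \oo --> x, (forall k, derivable g (s k) 1) &
         (fun k => (derive1 g) (s k)) @ \oo --> v]].

Definition clarke (g : R -> R) (x : R) : set R :=
  [set v | exists (n : nat) (w p : 'I_n -> R),
     [/\ forall i, 0 <= w i, \sum_i w i = 1, forall i, Bsubdiff g x (p i) &
         v = \sum_i w i * p i]].

Definition locally_lipschitz (g : R -> R) :=
  forall x : R, exists2 d : R, 0 < d & exists K : R, forall a b : R,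
    `|a - x| < d -> `|b - x| < d -> `|g a - g b| <= K * `|a - b|.

Definition dir_differentiable (g : R -> R) :=
  forall (x dir : R), exists L : R, forall e : R, 0 < e ->
    exists2 d : R, 0 < d & forall t : R, 0 < t -> t < d ->
      `|(g (x + t * dir) - g x) / t - L| < e.

Definition semismooth (g : R -> R) :=
  [/\ locally_lipschitz g, dir_differentiable g &
      forall x e : R, 0 < e -> exists2 d : R, 0 < d & forall h V : R,
        `|h| < d -> clarke g (x + h) V ->
        `|g (x + h) - g x - V * h| <= e * `|h| ].

Definition assumption3 (l : R -> R) :=
  [/\ forall t : R, derivable l t 1,
      exists a b : R, l a != l b &
      semismooth ((derive1 l))].

Variable m : nat.

Definition Lsum (l : R -> R) (u : 'cV[R]_m) : R := \sum_i l (u i 0).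
Definition gradL (l : R -> R) (u : 'cV[R]_m) : 'cV[R]_m := \col_i ((derive1 l) (u i 0)).

Definition Zset (l : R -> R) (lam : R) : set 'cV[R]_m :=
  [set z | (m%:R)^-1 * Lsum l z <= lam].

Definition Fmap (l : R -> R) (x : 'cV[R]_m) (lam : R) (u : 'cV[R]_m) (rho : R)
  : 'cV[R]_(m + 1) :=
  col_mx (u - x + (rho / m%:R) *: gradL l u)
         (((m%:R)^-1 * Lsum l u - lam)%:M).

Definition JF (l : R -> R) (u : 'cV[R]_m) (rho : R) : set 'M[R]_(m + 1) :=
  [set J | exists eta : 'rV[R]_m,
     (forall i, clarke ((derive1 l)) (u i 0) (eta 0 i)) /\
     J = block_mx (1%:M + (rho / m%:R) *: diag_mx eta)
                  ((m%:R)^-1 *: gradL l u)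
                  ((m%:R)^-1 *: (gradL l u)^T)
                  0].

End Defs.

Definition vnorm2 {R : realType} {n : nat} (v : 'cV[R]_n) : R :=
  Num.sqrt (\sum_i (v i 0) ^+ 2).

Definition specnorm {R : realType} {n : nat} (A : 'M[R]_n) : R :=
  sup [set vnorm2 (A *m v) | v in [set v : 'cV[R]_n | vnorm2 v = 1]].

(* Main.v *)
Require Import Defs.
From HB Require Import structures.
From mathcomp Require Import all_boot all_order all_algebra.
From mathcomp Require Import all_classical all_reals all_analysis.
From mathcomp Require Import ring lra.
Set Implicit Arguments. Unset Strict Implicit.
Import Order.TTheory GRing.Theory Num.Theory.
Import numFieldNormedType.Exports.
Local Open Scope classical_set_scope.
Local Open Scope ring_scope.

Lemma convex3 (R : realType) (l : R -> R) x y z : convexR_fun l -> x < y -> y < z ->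
  l y * (z - x) <= (z - y) * l x + (y - x) * l z.
Proof.
move=> cl xy yz.
have zx : 0 < z - x by rewrite subr_gt0; apply: lt_trans xy yz.
have t0 : 0 <= (z - y) / (z - x).
  by apply: divr_ge0; lra.
have t1 : (z - y) / (z - x) <= 1 by rewrite ler_pdivrMr // mul1r; lra.
have := cl x z _ t0 t1.
have -> : (z - y) / (z - x) * x + (1 - (z - y) / (z - x)) * z = y.
  by field; rewrite lt0r_neq0.
have -> : 1 - (z - y) / (z - x) = (y - x) / (z - x) by field; rewrite lt0r_neq0.
rewrite -ler_pdivlMr // => H; apply: le_trans H _.
by rewrite le_eqVlt; apply/orP; left; apply/eqP; field; rewrite lt0r_neq0.
Qed.

Lemma divle (R : realType) (a b p q : R) : 0 < p -> 0 < q -> a * q <= b * p -> a / p <= b / q.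
Proof. by move=> p0 q0 H; rewrite ler_pdivrMr // mulrAC ler_pdivlMr. Qed.
Lemma near_dnbhs0 (R : realType) (P : R -> Prop) (d : R) : 0 < d ->
  (forall h : R, h != 0 -> `|h| < d -> P h) -> \forall h \near 0^', P h.
Proof.
move=> d0 H; rewrite /within /=; apply/nbhs_ballP; exists d => //= h.
rewrite /ball /= sub0r normrN => hd hn; exact: H.
Qed.

Lemma deriv_ge (R : realType) (f : R -> R) x d lo : derivable f x 1 -> 0 < d ->
  (forall h, h != 0 -> `|h| < d -> lo <= (f (x + h) - f x) / h) -> lo <= derive1 f x.
Proof.
move=> df d0 H; rewrite derive1E; apply: limr_ge => //.
apply: near_dnbhs0 d0 _ => h hn hd /=.
by rewrite /shift /= -[h%:A]/(h * 1) mulr1 [h + x]addrC -[_ *: _]/(_ * _) mulrC; apply: H.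
Qed.

Lemma deriv_le (R : realType) (f : R -> R) x d hi : derivable f x 1 -> 0 < d ->
  (forall h, h != 0 -> `|h| < d -> (f (x + h) - f x) / h <= hi) -> derive1 f x <= hi.
Proof.
move=> df d0 H; rewrite derive1E; apply: limr_le => //.
apply: near_dnbhs0 d0 _ => h hn hd /=.
by rewrite /shift /= -[h%:A]/(h * 1) mulr1 [h + x]addrC -[_ *: _]/(_ * _) mulrC; apply: H.
Qed.

Lemma convex_deriv_mono (R : realType) (l : R -> R) : convexR_fun l ->
  (forall t, derivable l t 1) -> forall a b, a <= b -> derive1 l a <= derive1 l b.
Proof.
move=> cl dl a b; rewrite le_eqVlt => /orP[/eqP -> //|ab].
have ba : 0 < b - a by rewrite subr_gt0.
apply: (@le_trans _ _ ((l b - l a) / (b - a))).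
  apply: (deriv_le (dl a) ba) => h hn hd.
  have [h0|h0|h0] := ltgtP h 0; last by rewrite h0 eqxx in hn.
  - have -> : (l (a + h) - l a) / h = (l a - l (a + h)) / (a - (a + h)).
      by field; apply/andP; split => //; rewrite subr_eq0 -subr_eq0 opprD addNKr oppr_eq0.
    apply: divle; [lra| lra|].
    have ha : a + h < a by lra.
    have := convex3 cl ha ab; nra.
  - apply: divle => //.
    move: hd; rewrite gtr0_norm // => hd.
    have ha : a < a + h by lra.
    have hb : a + h < b by lra.
    have := convex3 cl ha hb; nra.
apply: (deriv_ge (dl b) ba) => h hn hd.
have [h0|h0|h0] := ltgtP h 0; last by rewrite h0 eqxx in hn.
- have -> : (l (b + h) - l b) / h = (l b - l (b + h)) / (b - (b + h)).
    by field; apply/andP; split => //; rewrite subr_eq0 -subr_eq0 opprD addNKr oppr_eq0.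
  apply: divle; [lra| lra|].
  move: hd; rewrite ltr0_norm // => hd.
  have ha : a < b + h by lra.
  have hb : b + h < b by lra.
  have := convex3 cl ha hb; nra.
- apply: divle => //.
  move: hd; rewrite gtr0_norm // => hd.
  have hb : b < b + h by lra.
  have := convex3 cl ab hb; nra.
Qed.

Lemma clarke_bounds (R : realType) (g : R -> R) x lo hi V :
  (forall v, Bsubdiff g x v -> lo <= v <= hi) -> clarke g x V -> lo <= V <= hi.
Proof.
move=> HB [n [w [p [w0 w1 Bp ->]]]].
have Hp i : lo <= p i <= hi by apply: HB.
apply/andP; split.
- apply: (@le_trans _ _ (\sum_i w i * lo)).
    by rewrite -mulr_suml w1 mul1r.
  by apply: ler_sum => i _; apply: ler_wpM2l => //; case/andP: (Hp i).
- apply: (@le_trans _ _ (\sum_i w i * hi)).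
    by apply: ler_sum => i _; apply: ler_wpM2l => //; case/andP: (Hp i).
  by rewrite -mulr_suml w1 mul1r.
Qed.

Lemma Bsubdiff_bound (R : realType) (g : R -> R) x lo hi d v : 0 < d ->
  (forall s, `|s - x| < d -> derivable g s 1 -> lo <= derive1 g s <= hi) ->
  Bsubdiff g x v -> lo <= v <= hi.
Proof.
move=> d0 H [s [sx ds dv]].
have ev : \forall k \near \oo, `|s k - x| < d by exact: cvgr_distC_lt.
apply/andP; split.
- apply: (cvgr_to_ge dv); apply: filterS ev => k hk.
  by case/andP: (H _ hk (ds k)).
- apply: (cvgr_to_le dv); apply: filterS ev => k hk.
  by case/andP: (H _ hk (ds k)).
Qed.

Lemma eta_bounds (R : realType) (l : R -> R) c d K u V :
  convexR_fun l -> (forall t, derivable l t 1) -> 0 < d ->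
  (forall a b, `|a - c| < d -> `|b - c| < d ->
     `|derive1 l a - derive1 l b| <= K * `|a - b|) ->
  `|u - c| < d / 2 -> clarke (derive1 l) u V -> 0 <= V <= K.
Proof.
move=> cl dl d0 Lip uc; apply: clarke_bounds => v.
have d1 : 0 < d / 2 - `|u - c| by lra.
apply: (Bsubdiff_bound d1) => s hs ds.
have sc : `|s - c| < d / 2.
  by have := ler_distD u s c; lra.
have mono := convex_deriv_mono cl dl.
apply/andP; split.
- apply: (deriv_ge ds (ltr01 : (0:R) < 1)) => h hn _.
  have [h0|h0|h0] := ltgtP h 0; last by rewrite h0 eqxx in hn.
  + apply: mulr_le0; last by rewrite invr_le0 ltW.
    by rewrite subr_le0; apply: mono; lra.
  + apply: divr_ge0; last exact: ltW.
    by rewrite subr_ge0; apply: mono; lra.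
- have d2 : 0 < d / 2 by lra.
  apply: (deriv_le ds d2) => h hn hd.
  have h1 : `|s + h - c| < d.
    have := ler_distD s (s + h) c.
    have -> : s + h - s = h by ring.
    lra.
  have s1 : `|s - c| < d by lra.
  have L := Lip _ _ h1 s1.
  have E : s + h - s = h by ring.
  rewrite E in L.
  apply: (le_trans (ler_norm _)).
  rewrite normrM normfV ler_pdivrMr ?normr_gt0 //.
Qed.

Definition Cst (R : realFieldType) (gam T : R) := ((gam + 2 * T) * (3 * gam + 8 * T) + 2 * gam) / gam ^+ 2.

Lemma real_core (R : realFieldType) (A P b q G gam T : R) :
  0 <= A -> 0 <= P -> 1 <= T -> 0 < gam -> gam <= G ->
  A + 2 * (b * q) <= P -> b ^+ 2 * G <= 2 * P + 2 * T * A ->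
  A + b ^+ 2 <= Cst gam T * (P + q ^+ 2).
Proof.
move=> A0 P0 T1 g0 gG h1 h2.
have s1 : b ^+ 2 * gam <= 2 * P + 2 * T * A.
  apply: le_trans h2; apply: ler_wpM2l => //; exact: sqr_ge0.
have s2 : 0 <= (gam * b + 4 * T * q) ^+ 2 := sqr_ge0 _.
have T0 : 0 < T by lra.
have t1 : 4 * T * (A * gam) <= 4 * T * (P * gam) - 8 * T * gam * (b * q).
  have : 0 <= 4 * T * gam by apply: mulr_ge0; lra.
  nra.
have t2 : - (8 * T * gam * (b * q)) <= gam ^+ 2 * b ^+ 2 + 16 * T ^+ 2 * q ^+ 2.
  move: s2; rewrite !expr2; lra.
have t3 : gam ^+ 2 * b ^+ 2 <= gam * (2 * P + 2 * T * A).
  rewrite expr2 -mulrA [gam * b ^+ 2]mulrC; apply: ler_wpM2l; lra.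
have t5 : 0 <= (T - 1) * (P * gam) by apply: mulr_ge0; nra.
have t4 : (2 * T) * (A * gam) <= (2 * T) * (3 * P * gam + 8 * T * q ^+ 2).
  rewrite !expr2 in t2 t3 *; nra.
have s3 : A * gam <= 3 * P * gam + 8 * T * q ^+ 2.
  by rewrite -(ler_pM2l (_ : 0 < 2 * T)) //; lra.
have s4 : (A + b ^+ 2) * gam ^+ 2 <= (gam + 2 * T) * (3 * P * gam + 8 * T * q ^+ 2) + 2 * P * gam.
  nra.
rewrite /Cst mulrAC ler_pdivlMr ?exprn_gt0 //.
apply: le_trans s4 _.
have q0 : 0 <= q ^+ 2 := sqr_ge0 _.
nra.
Qed.

Lemma sum_core (R : realFieldType) n (a g e : 'I_n -> R) b M gam :
  0 <= M -> (forall i, 0 <= e i <= M) -> 0 < gam -> gam <= \sum_i g i ^+ 2 ->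
  \sum_i a i ^+ 2 + b ^+ 2 <= Cst gam ((1 + M) ^+ 2) *
    (\sum_i ((1 + e i) * a i + g i * b) ^+ 2 + (\sum_i g i * a i) ^+ 2).
Proof.
move=> M0 eM g0 gG.
set p := fun i => (1 + e i) * a i + g i * b.
apply: (real_core (G := \sum_i g i ^+ 2)) => //.
- by apply: sumr_ge0 => i _; exact: sqr_ge0.
- by apply: sumr_ge0 => i _; exact: sqr_ge0.
- by rewrite expr2; nra.
- have S1 : \sum_i a i * p i = \sum_i (1 + e i) * a i ^+ 2 + b * \sum_i g i * a i.
    rewrite mulr_sumr -big_split /=; apply: eq_bigr => i _; rewrite /p; ring.
  have S2 : \sum_i a i ^+ 2 <= \sum_i (1 + e i) * a i ^+ 2.
    apply: ler_sum => i _; have := eM i; have := sqr_ge0 (a i); nra.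
  have S3 : 2 * \sum_i a i * p i <= \sum_i a i ^+ 2 + \sum_i p i ^+ 2.
    rewrite mulr_sumr -big_split /=; apply: ler_sum => i _.
    have := sqr_ge0 (a i - p i); rewrite !expr2; lra.
  lra.
  rewrite mulr_sumr mulr_sumr mulr_sumr -big_split /=.
  apply: ler_sum => i _.
  have E : b ^+ 2 * g i ^+ 2 = (p i - (1 + e i) * a i) ^+ 2 by rewrite /p; ring.
  rewrite E.
  have := eM i => /andP[e0 e1].
  have H1 : (1 + e i) ^+ 2 <= (1 + M) ^+ 2 by rewrite !expr2; nra.
  have := sqr_ge0 (p i + (1 + e i) * a i).
  have := sqr_ge0 (a i).
  have : (1 + e i) ^+ 2 * a i ^+ 2 <= (1 + M) ^+ 2 * a i ^+ 2 by apply: ler_wpM2r => //; exact: sqr_ge0.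
  rewrite /p !expr2; nra.
Qed.

Lemma sum_col_mx (R : ringType) m n (X : 'cV[R]_m) (Y : 'cV[R]_n) (f : R -> R) :
  \sum_i f (col_mx X Y i 0) = \sum_i f (X i 0) + \sum_i f (Y i 0).
Proof.
by rewrite big_split_ord /=; congr (_ + _); apply: eq_bigr => i _; rewrite ?col_mxEu ?col_mxEd.
Qed.

Lemma Jv_entries (R : comRingType) m (eta : 'rV[R]_m) (gr : 'cV[R]_m) (c mi : R) (a : 'cV[R]_m) (b : 'cV[R]_1) :
  block_mx (1%:M + c *: diag_mx eta) (mi *: gr) (mi *: gr^T) 0 *m col_mx a b =
  col_mx (\col_i ((1 + c * eta 0 i) * a i 0 + (mi * gr i 0) * b 0 0))
         (\col_(j < 1) \sum_i (mi * gr i 0) * a i 0).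
Proof.
rewrite mul_block_col mul0mx addr0 mulmxDl mul1mx -scalemxAl mul_diag_mx.
congr col_mx; apply/matrixP => i j; rewrite !mxE.
- by rewrite big_ord1 (ord1 j) !mxE; ring.
- by rewrite (ord1 i) (ord1 j); apply: eq_bigr => k _; rewrite !mxE.
Qed.

Lemma inj_unit (F : fieldType) n (A : 'M[F]_n) :
  (forall v : 'cV[F]_n, A *m v = 0 -> v = 0) -> A \in unitmx.
Proof.
move=> H; rewrite -unitmx_tr -row_free_unit -kermx_eq0.
set K := kermx A^T.
have E : A *m K^T = 0 by rewrite -[A]trmxK -trmx_mul mulmx_ker trmx0.
have : K^T = 0.
  apply/matrixP => i j.
  have Ej : A *m col j K^T = 0 by by rewrite colE mulmxA E mul0mx.
  by have := H _ Ej; move/matrixP/(_ i 0); rewrite !mxE.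
by move/(congr1 trmx); rewrite trmxK trmx0 => ->.
Qed.

Lemma J_bound (R : realType) m (eta : 'rV[R]_m) (gr : 'cV[R]_m) (c mi M gam : R)
  (v : 'cV[R]_(m + 1)) :
  0 <= M -> (forall i, 0 <= c * eta 0 i <= M) -> 0 < gam ->
  gam <= \sum_i (mi * gr i 0) ^+ 2 ->
  \sum_i (v i 0) ^+ 2 <= Cst gam ((1 + M) ^+ 2) *
     \sum_i ((block_mx (1%:M + c *: diag_mx eta) (mi *: gr) (mi *: gr^T) 0 *m v) i 0) ^+ 2.
Proof.
move=> M0 eM g0 gG.
rewrite -(vsubmxK v); move: (usubmx v) (dsubmx v) => a b.
rewrite Jv_entries !(sum_col_mx _ _ (fun x => x ^+ 2)) !big_ord1 [X in _ * (_ + X ^+ 2)]mxE.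
under [X in _ <= _ * (X + _)]eq_bigr do rewrite mxE.
exact: sum_core.
Qed.

Lemma sq_small (R : realType) (e S y : R) : 0 < e -> Num.sqrt S < e -> y ^+ 2 <= S -> `|y| < e.
Proof.
move=> e0 hS hy.
have S0 : 0 <= S by apply: le_trans hy; exact: sqr_ge0.
have hS2 : S < e ^+ 2.
  rewrite ltNge; apply/negP => h.
  have := h; rewrite -(ler_sqrt _ S0) sqrtr_sqr gtr0_norm // => h2.
  by move: hS; rewrite ltNge h2.
have := real_normK (num_real y) => Ey.
rewrite ltNge; apply/negP => h.
have : e ^+ 2 <= `|y| ^+ 2 by rewrite !expr2; apply: ler_pM => //; exact: ltW.
rewrite Ey => h3; have := le_lt_trans (le_trans h3 hy) hS2; by rewrite ltxx.
Qed.

Unset Implicit Arguments.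
Theorem mainTheorem5 (R : realType) (m : nat) (l : R -> R) (lam : R)
    (x ustar : 'cV[R]_m) (rhostar : R) :
  (0 < m)%N ->
  assumption1 l lam -> assumption3 l ->
  ~ Zset l lam x ->
  0 < rhostar ->
  Fmap l x lam ustar rhostar = 0 ->
  (forall J, JF l ustar rhostar J -> J \in unitmx) /\
  (exists (eps C : R), [/\ 0 < eps, 0 < C &
     forall (u : 'cV[R]_m) (rho : R),
       Num.sqrt (\sum_i (u i 0 - ustar i 0) ^+ 2 + (rho - rhostar) ^+ 2) < eps ->
       forall J, JF l u rho J -> J \in unitmx /\ specnorm (invmx J) <= C]).
Proof.
move=> m0 [mono conv _] [dl _ [Lip _ _]] nZ rho0 F0.
have [Etop Ebot] : (ustar - x + (rhostar / m%:R) *: gradL l ustar = 0) /\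
   ((((m%:R)^-1 * Lsum l ustar - lam)%:M : 'M[R]_1) = 0).
  by apply: eq_col_mx; rewrite col_mx0; exact: F0.
have Lx : (m%:R)^-1 * Lsum l ustar = lam.
  move/matrixP: Ebot => /(_ 0 0); rewrite !mxE /= mulr1n => /eqP.
  by rewrite subr_eq0 => /eqP.
have [j gj] : exists j, derive1 l (ustar j 0) != 0.
  apply: contrapT => Hn; apply: nZ.
  have G0 : gradL l ustar = 0.
    apply/matrixP => i k; rewrite !mxE.
    apply/eqP; apply/negPn/negP => hne; apply: Hn; by exists i.
  have ux : ustar = x.
    by move: Etop; rewrite G0 scaler0 addr0 => /eqP; rewrite subr_eq0 => /eqP.
  by rewrite /Zset /= -ux Lx.
have LipE : forall i : 'I_m, exists dk : R * R, 0 < dk.1 /\ forall a b,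
    `|a - ustar i 0| < dk.1 -> `|b - ustar i 0| < dk.1 ->
    `|derive1 l a - derive1 l b| <= dk.2 * `|a - b|.
  by move=> i; have [d d0 [K HK]] := Lip (ustar i 0); exists (d, K).
have [dK HdK] := choice LipE.
pose d i := (dK i).1; pose K i := (dK i).2.
have d0 i : 0 < d i by case: (HdK i).
have HL i : forall a b, `|a - ustar i 0| < d i -> `|b - ustar i 0| < d i ->
    `|derive1 l a - derive1 l b| <= K i * `|a - b| by case: (HdK i).
pose Kmax := \sum_i `|K i|.
have Kmax0 : 0 <= Kmax by apply: sumr_ge0.
have KK i : K i <= Kmax.
  apply: le_trans (ler_norm _) _; rewrite /Kmax (bigD1 i) //= lerDl.
  by apply: sumr_ge0.
pose dmin := (1 + \sum_i (d i / 2)^-1)^-1.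
have Sd0 : 0 <= \sum_i (d i / 2)^-1.
  by apply: sumr_ge0 => i _; rewrite invr_ge0; apply: ltW; apply: divr_gt0.
have dmin0 : 0 < dmin by rewrite /dmin invr_gt0; lra.
have dminle i : dmin <= d i / 2.
  have di2 : 0 < d i / 2 by apply: divr_gt0.
  rewrite /dmin -[d i / 2]invrK lef_pV2 ?posrE ?invr_gt0 //; last by lra.
  rewrite (bigD1 i) //=.
  have : 0 <= \sum_(k | k != i) (d k / 2)^-1.
    by apply: sumr_ge0 => k _; rewrite invr_ge0; apply: ltW; apply: divr_gt0.
  lra.
pose gj' := `|derive1 l (ustar j 0)|.
have gj0 : 0 < gj' by rewrite normr_gt0.
pose delta := gj' / (2 * (`|K j| + 1)).
have delta0 : 0 < delta by apply: divr_gt0 => //; apply: mulr_gt0 => //; apply: ltr_pwDr.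
pose eps := Num.min (rhostar / 2) (Num.min dmin delta).
have eps0 : 0 < eps by rewrite /eps !lt_min; apply/and3P; split => //; apply: divr_gt0.
have e1 : eps <= rhostar / 2 by rewrite /eps ge_min lexx.
have e2 : eps <= dmin by rewrite /eps ge_min [X in _ || X]ge_min lexx orbT.
have e3 : eps <= delta by rewrite /eps ge_min [X in _ || X]ge_min lexx !orbT.
pose gam := ((m%:R)^-1 * (gj' / 2)) ^+ 2.
have gam0 : 0 < gam.
  by rewrite /gam exprn_gt0 // mulr_gt0 // ?invr_gt0 ?ltr0n //; apply: divr_gt0.
pose M := 2 * rhostar * Kmax.
have M0 : 0 <= M by rewrite /M; apply: mulr_ge0 => //; lra.
have Cst0 : 0 < Cst gam ((1 + M) ^+ 2).
  rewrite /Cst; apply: divr_gt0; last by rewrite exprn_gt0.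
  have : 0 <= (1 + M) ^+ 2 := sqr_ge0 _.
  nra.
pose C := Num.sqrt (Cst gam ((1 + M) ^+ 2)).
have C0 : 0 < C by rewrite sqrtr_gt0.
have main : forall (u : 'cV[R]_m) (rho : R),
    Num.sqrt (\sum_i (u i 0 - ustar i 0) ^+ 2 + (rho - rhostar) ^+ 2) < eps ->
    forall J, JF l u rho J -> J \in unitmx /\ specnorm (invmx J) <= C.
  move=> u rho hdist J [eta [cl ->]].
  have Sge : 0 <= \sum_i (u i 0 - ustar i 0) ^+ 2.
    by apply: sumr_ge0 => i _; exact: sqr_ge0.
  have hu i : `|u i 0 - ustar i 0| < eps.
    apply: sq_small eps0 hdist _.
    have : 0 <= (rho - rhostar) ^+ 2 := sqr_ge0 _.
    rewrite (bigD1 i) //=.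
    have : 0 <= \sum_(k | k != i) (u k 0 - ustar k 0) ^+ 2.
      by apply: sumr_ge0 => k _; exact: sqr_ge0.
    lra.
  have hr : `|rho - rhostar| < eps.
    by apply: sq_small eps0 hdist _; lra.
  move: hr; rewrite ltr_norml => /andP[r1 r2].
  have rho_pos : 0 < rho by lra.
  have m1 : 1 <= (m%:R : R) by rewrite ler1n.
  have cm0 : 0 <= rho / m%:R by apply: divr_ge0; lra.
  have cm1 : rho / m%:R <= 2 * rhostar.
    rewrite ler_pdivrMr; last lra.
    nra.
  have etaB i : 0 <= eta 0 i <= K i.
    apply: (eta_bounds conv dl (d0 i) (HL i) _ (cl i)).
    have := hu i; have := dminle i; lra.
  have eM i : 0 <= rho / m%:R * eta 0 i <= M.
    have := etaB i => /andP[h1 h2]; have := KK i => h3.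
    apply/andP; split; first exact: mulr_ge0.
    rewrite /M; nra.
  have gamle : gam <= \sum_i ((m%:R)^-1 * gradL l u i 0) ^+ 2.
    rewrite (bigD1 j) //=.
    have : 0 <= \sum_(k | k != j) ((m%:R)^-1 * gradL l u k 0) ^+ 2.
      by apply: sumr_ge0 => k _; exact: sqr_ge0.
    suff : gam <= ((m%:R)^-1 * gradL l u j 0) ^+ 2 by lra.
    rewrite /gradL mxE.
    have hj : `|u j 0 - ustar j 0| < d j by have := hu j; have := dminle j; have := d0 j; lra.
    have hj' : `|ustar j 0 - ustar j 0| < d j by rewrite subrr normr0.
    have L := HL j _ _ hj hj'.
    have L2 : K j * `|u j 0 - ustar j 0| <= gj' / 2.
      apply: (le_trans (ler_wpM2r (normr_ge0 _) (ler_norm (K j)))).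
      have := hu j => hj2.
      have : `|K j| * `|u j 0 - ustar j 0| <= `|K j| * delta.
        by apply: ler_wpM2l => //; apply: ltW; apply: lt_le_trans hj2 e3.
      have -> : `|K j| * delta = gj' / 2 - delta / 2 * 2 * 0 - gj' / 2 / (`|K j| + 1).
        rewrite /delta; field.
        by rewrite lt0r_neq0 // ltr_pwDr.
      have : 0 <= gj' / 2 / (`|K j| + 1) by apply: divr_ge0; [lra| apply: ltW; apply: ltr_pwDr].
      lra.
    have tri := ler_distD (derive1 l (u j 0)) (derive1 l (ustar j 0)) 0.
    rewrite !subr0 distrC in tri.
    have gu : gj' / 2 <= `|derive1 l (u j 0)|.
      have Eg : gj' = `|derive1 l (ustar j 0)| by [].
      lra.
    rewrite /gam !exprMn; apply: ler_wpM2l; first exact: sqr_ge0.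
    rewrite -(real_normK (num_real (derive1 l (u j 0)))).
    have : 0 <= gj' / 2 by lra.
    rewrite !expr2; nra.
  have JB := fun v => J_bound v M0 eM gam0 gamle.
  set J0 := block_mx _ _ _ _ in JB *.
  have Ju : J0 \in unitmx.
    apply: inj_unit => v Jv0.
    have := JB v; rewrite Jv0.
    rewrite [X in _ <= _ * X]big1 ?mulr0; last by move=> i _; rewrite mxE expr0n.
    move=> H; apply/matrixP => i k; rewrite (ord1 k) mxE.
    have : (v i 0) ^+ 2 <= 0.
      apply: le_trans H; rewrite (bigD1 i) //= lerDl.
      by apply: sumr_ge0 => a _; exact: sqr_ge0.
    have := sqr_ge0 (v i 0) => h1 h2.
    by apply/eqP; rewrite -sqrf_eq0 eq_le h2 h1.
  split => //.
  rewrite /specnorm; apply: ge_sup.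
    pose i0 : 'I_(m + 1) := rshift m ord0.
    pose e0 : 'cV[R]_(m + 1) := delta_mx i0 ord0.
    exists (vnorm2 (invmx J0 *m e0)); exists e0 => //.
    rewrite /= /vnorm2 (bigD1 i0) //= big1 ?addr0; last first.
      by move=> i /negbTE hi; rewrite mxE hi /= expr0n.
    by rewrite mxE !eqxx expr1n sqrtr1.
  move=> _ [w w1 <-].
  have Sw : \sum_i (w i 0) ^+ 2 = 1.
    move: w1; rewrite /vnorm2 => w1.
    have S0 : 0 <= \sum_i (w i 0) ^+ 2 by apply: sumr_ge0 => i _; exact: sqr_ge0.
    by rewrite -(sqr_sqrtr S0) w1 expr1n.
  have := JB (invmx J0 *m w); rewrite mulKVmx // Sw mulr1 => H.
  by rewrite /vnorm2 /C ler_sqrt //; apply: ltW.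
have ustar_ok : Num.sqrt (\sum_i (ustar i 0 - ustar i 0) ^+ 2 + (rhostar - rhostar) ^+ 2) < eps.
  rewrite subrr expr0n /= addr0 big1 ?sqrtr0 //.
  by move=> i _; rewrite subrr expr0n.
split; first by move=> J HJ; case: (main _ _ ustar_ok J HJ).
by exists eps, C; split.
Qed.
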